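(* For every $n\equiv 15 \pmod{16}$ (with $n\geq 15$), there exists an almost 2-perfect maximum 8-cycle packing of $K_n$.
   Context: An 8-cycle packing of $K_n$ on vertex set $\mathcal{X}$ is a triple $(\mathcal{X},\mathcal{C},\mathcal{L})$ with $\mathcal{C}$ a collection of pairwise edge-disjoint 8-cycles of $K_n$ and leave $\mathcal{L}$ the set of edges in no cycle of $\mathcal{C}$; it is maximum if $|\mathcal{L}|$ is minimum among all 8-cycle packings of $K_n$. For an 8-cycle $C$, an inside 8-cycle of $C$ is an 8-cycle on the same vertex set sharing no edge with $C$. The packing is almost 2-perfect if one can choose for each $C\in\mathcal{C}$ an inside 8-cycle $C'$ such that $(\mathcal{X},\{C'\},\mathcal{L})$ is again an 8-cycle packing with the same leave. *)

(* Defs.v *)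
From mathcomp Require Import all_boot.
Set Implicit Arguments. Unset Strict Implicit. Unset Printing Implicit Defensive.

Definition Kn_edges (n : nat) : {set {set 'I_n}} := [set e : {set 'I_n} | #|e| == 2].

Definition is_cycle8 n (c : 8.-tuple 'I_n) : bool := uniq c.

Definition cyc_edges n (c : 8.-tuple 'I_n) : {set {set 'I_n}} :=
  [set [set tnth c i; tnth c (ordS i)] | i : 'I_8].

Definition cyc_verts n (c : 8.-tuple 'I_n) : {set 'I_n} := [set x in c].

Definition packing8 n (cs : seq (8.-tuple 'I_n)) : bool :=
  all (@is_cycle8 n) cs &&
  pairwise (fun c d => [disjoint cyc_edges c & cyc_edges d]) cs.

Definition leave8 n (cs : seq (8.-tuple 'I_n)) : {set {set 'I_n}} :=
  Kn_edges n :\: \bigcup_(c <- cs) cyc_edges c.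

Definition maximum_packing8 n (cs : seq (8.-tuple 'I_n)) : Prop :=
  packing8 cs /\
  forall cs' : seq (8.-tuple 'I_n), packing8 cs' -> #|leave8 cs| <= #|leave8 cs'|.

Definition inside8 n (c c' : 8.-tuple 'I_n) : bool :=
  [&& is_cycle8 c', cyc_verts c' == cyc_verts c &
      [disjoint cyc_edges c & cyc_edges c']].

Definition almost_2perfect8 n (cs : seq (8.-tuple 'I_n)) : Prop :=
  exists cs' : seq (8.-tuple 'I_n),
    [/\ all2 (@inside8 n) cs cs', packing8 cs' & leave8 cs' = leave8 cs].

(* Main.v *)
Require Import Defs.
From mathcomp Require Import all_boot zify.
Set Implicit Arguments. Unset Strict Implicit. Unset Printing Implicit Defensive.

Lemma set2_eqE (T : finType) (a b c d : T) :
  [set a; b] = [set c; d] -> (a = c /\ b = d) \/ (a = d /\ b = c).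
Proof.
move=> /setP H.
have := H a; have := H b; have := H c; have := H d; rewrite !inE !eqxx /= ?orbT.
move=> Hd Hc Hb Ha.
case/orP: Hd => /eqP Hd; case/orP: Hc => /eqP Hc;
case/esym/orP: Hb => /eqP Hb; case/esym/orP: Ha => /eqP Ha; subst;
  first [by left | by right].
Qed.

Lemma ordS_neq (i : 'I_8) : i != ordS i.
Proof. apply/eqP => /(congr1 val) /=; case: i => i /= hi; lia. Qed.

Lemma ordS_swap (i j : 'I_8) : i = ordS j -> ordS i = j -> False.
Proof.
move=> /(congr1 val) /= h1 /(congr1 val) /=; rewrite h1.
case: j {h1} => j /= hj; lia.
Qed.

Section Generic.
Variable n : nat.
Implicit Types (c : 8.-tuple 'I_n).

Definition edgeF c (i : 'I_8) : {set 'I_n} := [set tnth c i; tnth c (ordS i)].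

Lemma edgeF_inj c : uniq c -> injective (edgeF c).
Proof.
move=> /tuple_uniqP inj i j /set2_eqE [[h _]|[h1 h2]]; first exact: inj.
by case: (ordS_swap (inj _ _ h1) (inj _ _ h2)).
Qed.

Lemma card_cyc c : uniq c -> #|cyc_edges c| = 8.
Proof.
move=> u; rewrite /cyc_edges (card_imset _ (edgeF_inj u)).
by rewrite cardT size_enum_ord.
Qed.

Lemma cyc_sub c : uniq c -> cyc_edges c \subset Kn_edges n.
Proof.
move=> /tuple_uniqP inj; apply/subsetP => e /imsetP [i _ ->].
rewrite inE cards2.
have -> // : tnth c i != tnth c (ordS i).
by apply/negP => /eqP h; move: (ordS_neq i); rewrite {1}(inj _ _ h) eqxx.
Qed.

Lemma card_Kn : #|Kn_edges n| = 'C(n, 2).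
Proof. by rewrite /Kn_edges card_draws card_ord. Qed.

End Generic.

Section Union.
Variables (I : eqType) (X : finType) (F : I -> {set X}).

Lemma sub_bigcup (s : seq I) y : y \in s -> F y \subset \bigcup_(i <- s) F i.
Proof. by move=> ys; rewrite (big_rem y ys) /= subsetUl. Qed.

Lemma card_bigcup_le (s : seq I) : #|\bigcup_(i <- s) F i| <= \sum_(i <- s) #|F i|.
Proof.
elim: s => [|x s IH]; first by rewrite !big_nil cards0.
rewrite !big_cons; apply: leq_trans (leq_card_setU _ _).1 _.
by rewrite leq_add2l.
Qed.

Lemma pairwise_of_card (s : seq I) :
  #|\bigcup_(i <- s) F i| = \sum_(i <- s) #|F i| ->
  pairwise (fun i j => [disjoint F i & F j]) s.
Proof.
elim: s => [|x s IH] //; rewrite !big_cons => H.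
have h1 := leq_card_setU (F x) (\bigcup_(i <- s) F i).
have h2 := card_bigcup_le s.
have eU : #|\bigcup_(i <- s) F i| = \sum_(i <- s) #|F i|.
  move: h1 => [h1 _]; lia.
have dj : [disjoint F x & \bigcup_(i <- s) F i].
  move: h1 => [h1 <-]; apply/eqP; lia.
rewrite pairwise_cons (IH eU) andbT; apply/allP => y ys.
exact: disjointWr (sub_bigcup ys) dj.
Qed.

Lemma card_of_pairwise (s : seq I) :
  pairwise (fun i j => [disjoint F i & F j]) s ->
  #|\bigcup_(i <- s) F i| = \sum_(i <- s) #|F i|.
Proof.
elim: s => [|x s IH]; first by rewrite !big_nil cards0.
rewrite pairwise_cons => /andP [ax ps]; rewrite !big_cons -(IH ps).
have h1 := leq_card_setU (F x) (\bigcup_(i <- s) F i).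
apply/eqP; rewrite h1.2.
elim: s {IH h1} ax ps => [|y s IH2].
  by rewrite big_nil -setI_eq0 setI0.
rewrite /= => /andP [dxy ax] /andP [_ ps].
rewrite big_cons -setI_eq0 setIUr setU_eq0 !setI_eq0 dxy /=; exact: IH2.
Qed.

End Union.

Section Parity.
Variable n : nat.
Implicit Types (c : 8.-tuple 'I_n).

Lemma card_star (a : 'I_n) : #|[set e in Kn_edges n | a \in e]| = n.-1.
Proof.
have -> : [set e in Kn_edges n | a \in e] = [set [set a; x] | x in [set~ a]].
  apply/setP => e; rewrite !inE; apply/andP/imsetP.
  - move=> [/cards2P [u [v [uv ->]]]]; rewrite !inE => /orP [/eqP->|/eqP->].
    + by exists v; rewrite // !inE eq_sym.
    + by exists u; [rewrite !inE | rewrite setUC].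
  - by move=> [x]; rewrite !inE => xa ->; rewrite cards2 (eq_sym a x) xa !inE eqxx.
rewrite card_in_imset ?cardsC1 ?card_ord //.
move=> x y; rewrite !inE => xa ya /set2_eqE [[_ ->]|[ay _]] //.
by move: ya; rewrite ay eqxx.
Qed.

Lemma ordS_pred_neq (j : 'I_8) : j != ord_pred j.
Proof. apply/eqP => /(congr1 val) /=; case: j => j /= hj; lia. Qed.

Lemma deg_cyc c (a : 'I_n) : uniq c -> ~~ odd #|[set e in cyc_edges c | a \in e]|.
Proof.
move=> u.
have -> : [set e in cyc_edges c | a \in e] = edgeF c @: [set i | a \in edgeF c i].
  apply/setP => e; rewrite /cyc_edges !inE; apply/idP/idP.
    by move=> /andP [/imsetP [i _ ->] ai]; apply/imsetP; exists i; rewrite // inE.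
  by move=> /imsetP [i]; rewrite inE => ai ->; rewrite ai andbT; apply/imsetP; exists i.
rewrite card_imset; last exact: edgeF_inj.
case: (boolP (a \in c)) => [/tnthP [j ->]|na].
  have inj := tuple_uniqP _ u.
  have -> : [set i | tnth c j \in edgeF c i] = [set j; ord_pred j].
    apply/setP => i; rewrite !inE !(inj_eq inj) (eq_sym j i).
    case: (eqVneq i j) => //= _.
    by apply/eqP/eqP => ->; [rewrite ordSK | rewrite ord_predK].
  by rewrite cards2 ordS_pred_neq.
have -> : [set i | a \in edgeF c i] = set0.
  apply/setP => i; rewrite !inE; apply/negP => /orP [] /eqP e;
  by move: na; rewrite e mem_tnth.
by rewrite cards0.
Qed.

Lemma setI_bigcup (I : eqType) (S : {set {set 'I_n}}) (F : I -> {set {set 'I_n}}) (s : seq I) :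
  S :&: \bigcup_(i <- s) F i = \bigcup_(i <- s) (S :&: F i).
Proof.
elim: s => [|x s IH]; first by rewrite !big_nil setI0.
by rewrite !big_cons setIUr IH.
Qed.

Lemma bigcup_sub (cs : seq (8.-tuple 'I_n)) :
  all (@is_cycle8 n) cs -> \bigcup_(c <- cs) cyc_edges c \subset Kn_edges n.
Proof.
move=> ac; rewrite bigcup_seq; apply/bigcupsP => c cin; apply: cyc_sub.
exact: (allP ac c cin).
Qed.

Lemma leave_not1 (cs : seq (8.-tuple 'I_n)) : odd n -> packing8 cs -> #|leave8 cs| != 1.
Proof.
move=> on /andP [ac pc]; apply/negP => /cards1P [e he].
have eL : e \in leave8 cs by rewrite he set11.
move: (eL); rewrite inE => /andP [eU eK].
move: (eK); rewrite inE => /cards2P [a [b [ab ea]]].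
set U := \bigcup_(c <- cs) cyc_edges c.
have UK : U \subset Kn_edges n by exact: bigcup_sub.
set S := [set e0 in Kn_edges n | a \in e0].
have h1 := cardsID U S.
have h2 : S :\: U = [set e].
  apply/setP => x; rewrite !inE; apply/idP/idP.
  - move=> /andP [xU /andP [xK _]].
    have : x \in leave8 cs by rewrite !inE xU xK.
    by rewrite he inE.
  - by move=> /eqP ->; move: eK; rewrite eU inE => ->; rewrite {1}ea !inE eqxx.
have h3 : S :&: U = \bigcup_(c <- cs) (S :&: cyc_edges c) by rewrite setI_bigcup.
have h4 : pairwise (fun c d => [disjoint S :&: cyc_edges c & S :&: cyc_edges d]) cs.
  apply: sub_pairwise pc => c d /= dj.
  exact: disjointWl (subsetIr _ _) (disjointWr (subsetIr _ _) dj).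
have h5 := card_of_pairwise h4.
have h6 : ~~ odd (\sum_(c <- cs) #|S :&: cyc_edges c|).
  rewrite big_seq; apply: (big_ind (fun x => ~~ odd x)) => //.
    by move=> x y ox oy; rewrite oddD (negbTE ox) (negbTE oy).
  move=> c cin.
  have -> : S :&: cyc_edges c = [set e0 in cyc_edges c | a \in e0].
    apply/setP => x; rewrite !inE; apply/idP/idP.
      by move=> /andP [/andP [_ ->] ->].
    move=> /andP [xc ->]; rewrite xc andbT.
    by rewrite andbT; have := subsetP (cyc_sub (allP ac c cin)) x xc; rewrite inE.
  exact: deg_cyc (allP ac c cin).
move: h1; rewrite h2 cards1 h3 h5 card_star => h7.
have on1 : ~~ odd n.-1 by case: (n) on.
by move: on1; rewrite -h7 oddD (negbTE h6).
Qed.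

End Parity.

Section Framework.
Variable n : nat.
Implicit Types (cs : seq (8.-tuple 'I_n)) (L : {set {set 'I_n}}).

Definition cover cs L := forall a b : 'I_n, a != b -> [set a; b] \notin L ->
  exists2 c, c \in cs & [set a; b] \in cyc_edges c.

Lemma cover_U cs L : cover cs L -> Kn_edges n :\: L \subset \bigcup_(c <- cs) cyc_edges c.
Proof.
move=> H; apply/subsetP => e; rewrite !inE => /andP [eL /cards2P [a [b [ab ea]]]].
subst e; have [c cin ec] := H a b ab eL.
by rewrite bigcup_seq; apply/bigcupP; exists c.
Qed.

Lemma sum8 cs : all (@is_cycle8 n) cs -> \sum_(c <- cs) #|cyc_edges c| = 8 * size cs.
Proof.
elim: cs => [|c cs IH]; first by rewrite big_nil.
by rewrite /= => /andP [uc ac]; rewrite big_cons card_cyc // IH // mulnS.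
Qed.

Lemma packing_exact cs L : all (@is_cycle8 n) cs -> #|L| <= 9 ->
  8 * size cs + 9 = 'C(n, 2) -> cover cs L ->
  packing8 cs /\ \bigcup_(c <- cs) cyc_edges c = Kn_edges n :\: L.
Proof.
move=> ac hL hs hc.
have h1 := card_bigcup_le (@cyc_edges n) cs.
rewrite sum8 // in h1.
have h2 := cover_U hc.
have h3 := subset_leq_card h2.
have h4 : #|Kn_edges n :&: L| <= 9 by apply: leq_trans (subset_leq_card (subsetIr _ _)) hL.
rewrite cardsD card_Kn in h3.
have eU : #|\bigcup_(c <- cs) cyc_edges c| = \sum_(c <- cs) #|cyc_edges c|.
  rewrite sum8 //; apply/eqP; rewrite eqn_leq h1 /=.
  by apply: leq_trans _ h3; lia.
split; first by rewrite /packing8 ac (pairwise_of_card eU).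
apply/eqP; rewrite eq_sym eqEcard h2 /= cardsD card_Kn eU sum8 //; lia.
Qed.

Lemma leave_card cs : packing8 cs -> #|leave8 cs| + 8 * size cs = 'C(n, 2).
Proof.
move=> /andP [ac pc].
have h := card_of_pairwise pc; rewrite sum8 // in h.
have hs := bigcup_sub ac.
rewrite /leave8 cardsD (setIidPr hs) h -card_Kn.
have := subset_leq_card hs; rewrite h; lia.
Qed.

Lemma all2_inside_all cs cs' : all2 (@inside8 n) cs cs' -> all (@is_cycle8 n) cs'.
Proof.
elim: cs cs' => [|c cs IH] [|c' cs'] //= /andP [/and3P [h _ _] /IH ->].
by rewrite h.
Qed.

Lemma all2_size (S T : Type) (r : S -> T -> bool) s t : all2 r s t -> size s = size t.
Proof. by rewrite all2E => /andP [/eqP]. Qed.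

Lemma framework cs cs' L : odd n -> all (@is_cycle8 n) cs -> all2 (@inside8 n) cs cs' ->
  #|L| <= 9 -> 8 * size cs + 9 = 'C(n, 2) -> cover cs L -> cover cs' L ->
  maximum_packing8 cs /\ almost_2perfect8 cs.
Proof.
move=> on ac a2 hL hs hc hc'.
have [pk eU] := packing_exact ac hL hs hc.
have ac' := all2_inside_all a2.
have sz := all2_size a2.
have [pk' eU'] := packing_exact ac' hL (etrans (congr1 (fun x => 8 * x + 9) (esym sz)) hs) hc'.
split.
  split => // cs'' pk''.
  have h1 := leave_card pk; have h2 := leave_card pk''.
  have h3 := leave_not1 on pk''.
  move/eqP: h3 => h3; lia.
by exists cs'; split => //; rewrite /leave8 eU eU'.
Qed.

End Framework.

Definition cycN (N : nat) (h : nat -> nat) (s : seq nat) : 8.-tuple 'I_N.+1 :=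
  [tuple (inord (h (nth 0 s i)) : 'I_N.+1) | i < 8].

Definition sameE (p q : nat * nat) :=
  ((p.1 == q.1) && (p.2 == q.2)) || ((p.1 == q.2) && (p.2 == q.1)).
Definition redge (s : seq nat) (i : nat) := (nth 0 s i, nth 0 s (i.+1 %% 8)).
Definition wf (m : nat) (s : seq nat) := [&& size s == 8, all (fun v => v < m) s & uniq s].
Definition disjR (s s' : seq nat) :=
  all (fun i => all (fun j => ~~ sameE (redge s i) (redge s' j)) (iota 0 8)) (iota 0 8).
Definition insideR m (s s' : seq nat) :=
  [&& wf m s, wf m s', all (fun v => v \in s) s', all (fun v => v \in s') s & disjR s s'].
Definition covR (T : seq (seq nat)) x y :=
  has (fun s => has (fun i => sameE (redge s i) (x, y)) (iota 0 8)) T.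

Definition goodh N m (h : nat -> nat) :=
  (forall v, v < m -> h v <= N) /\ (forall u v, u < m -> v < m -> h u = h v -> u = v).

Section Relabel.
Variables (N m : nat) (h : nat -> nat).
Hypothesis gh : goodh N m h.

Lemma nth_lt s i : wf m s -> i < 8 -> nth 0 s i < m.
Proof.
move=> /and3P [/eqP sz al _] i8; apply: (allP al); apply: mem_nth; by rewrite sz.
Qed.

Lemma val_cyc s (i : 'I_8) : wf m s -> val (tnth (cycN N h s) i) = h (nth 0 s i).
Proof.
move=> w; rewrite tnth_mktuple /= inordK // ltnS; apply: gh.1; exact: nth_lt.
Qed.

Lemma uniq_cyc s : wf m s -> uniq (cycN N h s).
Proof.
move=> w; apply/tuple_uniqP => i j /(congr1 val); rewrite !val_cyc //.
move=> /(gh.2 _ _ (nth_lt w (ltn_ord i)) (nth_lt w (ltn_ord j))) /eqP.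
move: w => /and3P [/eqP sz _ u]; rewrite nth_uniq ?sz // => /eqP e.
exact: val_inj.
Qed.

Lemma mem_cycN s s' (i : 'I_8) : wf m s -> nth 0 s' i \in s ->
  tnth (cycN N h s') i \in cycN N h s.
Proof.
move=> w /(nthP 0) [j jlt ej]; move: (w) => /and3P [/eqP sz _ _].
rewrite sz in jlt.
have -> : tnth (cycN N h s') i = tnth (cycN N h s) (Ordinal jlt).
  by rewrite !tnth_mktuple /= ej.
exact: mem_tnth.
Qed.

Lemma inside_cyc s s' : insideR m s s' -> inside8 (cycN N h s) (cycN N h s').
Proof.
move=> /and5P [w w' a1 a2 dj].
rewrite /inside8 /is_cycle8 uniq_cyc //=; apply/andP; split.
  move: (w) (w') => /and3P [/eqP sz _ _] /and3P [/eqP sz' _ _].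
  apply/eqP/setP => x; rewrite !inE; apply/idP/idP => /tnthP [i ->];
  apply: mem_cycN => //; [apply: (allP a1) | apply: (allP a2)];
  apply: mem_nth; rewrite ?sz ?sz'; exact: ltn_ord.
rewrite -setI_eq0; apply/eqP/setP => e; rewrite !inE /cyc_edges.
apply/negP => /andP [/imsetP [i _ ->] /imsetP [j _ /set2_eqE H]].
have inj x y : x < m -> y < m -> (inord (h x) : 'I_N.+1) = inord (h y) -> x = y.
  move=> xm ym /(congr1 val); rewrite /= !inordK ?ltnS; last 2 first.
  - exact: gh.1. - exact: gh.1.
  exact: gh.2.
have lt := nth_lt w; have lt' := nth_lt w'.
have hi := ltn_ord i; have hj := ltn_ord j.
have hi1 : i.+1 %% 8 < 8 by rewrite ltn_mod.
have hj1 : j.+1 %% 8 < 8 by rewrite ltn_mod.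
move: H; rewrite !tnth_mktuple /= => H.
have : sameE (redge s i) (redge s' j).
  rewrite /sameE /redge /=.
  case: H => [[e1 e2]|[e1 e2]].
    by rewrite (inj _ _ (lt _ hi) (lt' _ hj) e1) (inj _ _ (lt _ hi1) (lt' _ hj1) e2) !eqxx.
  by rewrite (inj _ _ (lt _ hi) (lt' _ hj1) e1) (inj _ _ (lt _ hi1) (lt' _ hj) e2) !eqxx orbT.
have hi' : (i : nat) \in iota 0 8 by rewrite mem_iota.
have hj' : (j : nat) \in iota 0 8 by rewrite mem_iota.
by move=> H2; move/allP: dj => /(_ _ hi') /allP /(_ _ hj'); rewrite H2.
Qed.

Lemma cov_lift T x y (a b : 'I_N.+1) : covR T x y ->
  a = inord (h x) -> b = inord (h y) ->
  exists2 s, s \in T & [set a; b] \in cyc_edges (cycN N h s).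
Proof.
move=> /hasP [s sT /hasP [i iin H]] -> ->; exists s => //.
rewrite mem_iota /= in iin.
have E : [set (inord (h (nth 0 s i)) : 'I_N.+1); inord (h (nth 0 s (i.+1 %% 8)))]
    \in cyc_edges (cycN N h s).
  by apply/imsetP; exists (Ordinal iin); rewrite // !tnth_mktuple.
move: H; rewrite /sameE /redge /= => /orP [] /andP [/eqP e1 /eqP e2].
  by rewrite -e1 -e2.
by rewrite setUC -e1 -e2.
Qed.

End Relabel.
Definition raw1 : seq (seq nat) :=
 [:: [:: 14; 4; 12; 11; 0; 9; 5; 8];
  [:: 8; 7; 11; 10; 9; 12; 0; 13];
  [:: 8; 9; 11; 13; 1; 4; 2; 0];
  [:: 0; 7; 1; 8; 12; 3; 14; 6];
  [:: 4; 9; 2; 1; 5; 14; 10; 13];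
  [:: 13; 12; 1; 0; 14; 2; 5; 3];
  [:: 13; 14; 1; 3; 6; 9; 7; 5];
  [:: 5; 12; 6; 13; 2; 8; 4; 11];
  [:: 9; 14; 7; 6; 10; 4; 0; 3];
  [:: 3; 2; 6; 5; 4; 7; 10; 8];
  [:: 3; 4; 6; 8; 11; 14; 12; 10];
  [:: 10; 2; 11; 3; 7; 13; 9; 1]].
Definition raw1' : seq (seq nat) :=
 [:: [:: 14; 9; 12; 0; 8; 4; 5; 11];
  [:: 8; 9; 11; 0; 7; 13; 12; 10];
  [:: 8; 1; 9; 0; 4; 13; 2; 11];
  [:: 0; 1; 12; 14; 7; 6; 8; 3];
  [:: 4; 14; 2; 5; 13; 9; 10; 1];
  [:: 13; 14; 1; 5; 12; 3; 2; 0];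
  [:: 13; 6; 14; 5; 9; 3; 7; 1];
  [:: 5; 6; 2; 4; 12; 11; 13; 8];
  [:: 9; 4; 7; 10; 3; 14; 0; 6];
  [:: 3; 4; 6; 10; 2; 8; 7; 5];
  [:: 3; 11; 4; 10; 14; 8; 12; 6];
  [:: 10; 11; 7; 9; 2; 1; 3; 13]].
Definition raw2 : seq (seq nat) :=
 [:: [:: 17; 26; 16; 10; 21; 20; 24; 2];
  [:: 25; 28; 12; 20; 22; 8; 18; 13];
  [:: 3; 27; 14; 30; 15; 12; 29; 22];
  [:: 18; 27; 17; 11; 22; 21; 25; 3];
  [:: 26; 29; 13; 21; 23; 9; 19; 14];
  [:: 4; 28; 0; 30; 16; 13; 15; 23];
  [:: 19; 28; 18; 12; 23; 22; 26; 4];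
  [:: 27; 15; 14; 22; 24; 10; 20; 0];
  [:: 5; 29; 1; 30; 17; 14; 16; 24];
  [:: 20; 29; 19; 13; 24; 23; 27; 5];
  [:: 28; 16; 0; 23; 25; 11; 21; 1];
  [:: 6; 15; 2; 30; 18; 0; 17; 25];
  [:: 21; 15; 20; 14; 25; 24; 28; 6];
  [:: 29; 17; 1; 24; 26; 12; 22; 2];
  [:: 7; 16; 3; 30; 19; 1; 18; 26];
  [:: 22; 16; 21; 0; 26; 25; 29; 7];
  [:: 15; 18; 2; 25; 27; 13; 23; 3];
  [:: 8; 17; 4; 30; 20; 2; 19; 27];
  [:: 23; 17; 22; 1; 27; 26; 15; 8];
  [:: 16; 19; 3; 26; 28; 14; 24; 4];
  [:: 9; 18; 5; 30; 21; 3; 20; 28];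
  [:: 24; 18; 23; 2; 28; 27; 16; 9];
  [:: 17; 20; 4; 27; 29; 0; 25; 5];
  [:: 10; 19; 6; 30; 22; 4; 21; 29];
  [:: 25; 19; 24; 3; 29; 28; 17; 10];
  [:: 18; 21; 5; 28; 15; 1; 26; 6];
  [:: 11; 20; 7; 30; 23; 5; 22; 15];
  [:: 26; 20; 25; 4; 15; 29; 18; 11];
  [:: 19; 22; 6; 29; 16; 2; 27; 7];
  [:: 12; 21; 8; 30; 24; 6; 23; 16];
  [:: 27; 21; 26; 5; 16; 15; 19; 12];
  [:: 20; 23; 7; 15; 17; 3; 28; 8];
  [:: 13; 22; 9; 30; 25; 7; 24; 17];
  [:: 28; 22; 27; 6; 17; 16; 20; 13];
  [:: 21; 24; 8; 16; 18; 4; 29; 9];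
  [:: 14; 23; 10; 30; 26; 8; 25; 18];
  [:: 29; 23; 28; 7; 18; 17; 21; 14];
  [:: 22; 25; 9; 17; 19; 5; 15; 10];
  [:: 0; 24; 11; 30; 27; 9; 26; 19];
  [:: 15; 24; 29; 8; 19; 18; 22; 0];
  [:: 23; 26; 10; 18; 20; 6; 16; 11];
  [:: 1; 25; 12; 30; 28; 10; 27; 20];
  [:: 16; 25; 15; 9; 20; 19; 23; 1];
  [:: 24; 27; 11; 19; 21; 7; 17; 12];
  [:: 2; 26; 13; 30; 29; 11; 28; 21]].
Definition raw2' : seq (seq nat) :=
 [:: [:: 17; 16; 20; 2; 21; 26; 10; 24];
  [:: 25; 8; 28; 22; 13; 20; 18; 12];
  [:: 3; 15; 27; 30; 12; 22; 14; 29];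
  [:: 18; 17; 21; 3; 22; 27; 11; 25];
  [:: 26; 9; 29; 23; 14; 21; 19; 13];
  [:: 4; 16; 28; 30; 13; 23; 0; 15];
  [:: 19; 18; 22; 4; 23; 28; 12; 26];
  [:: 27; 10; 15; 24; 0; 22; 20; 14];
  [:: 5; 17; 29; 30; 14; 24; 1; 16];
  [:: 20; 19; 23; 5; 24; 29; 13; 27];
  [:: 28; 11; 16; 25; 1; 23; 21; 0];
  [:: 6; 18; 15; 30; 0; 25; 2; 17];
  [:: 21; 20; 24; 6; 25; 15; 14; 28];
  [:: 29; 12; 17; 26; 2; 24; 22; 1];
  [:: 7; 19; 16; 30; 1; 26; 3; 18];
  [:: 22; 21; 25; 7; 26; 16; 0; 29];
  [:: 15; 13; 18; 27; 3; 25; 23; 2];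
  [:: 8; 20; 17; 30; 2; 27; 4; 19];
  [:: 23; 22; 26; 8; 27; 17; 1; 15];
  [:: 16; 14; 19; 28; 4; 26; 24; 3];
  [:: 9; 21; 18; 30; 3; 28; 5; 20];
  [:: 24; 23; 27; 9; 28; 18; 2; 16];
  [:: 17; 0; 20; 29; 5; 27; 25; 4];
  [:: 10; 22; 19; 30; 4; 29; 6; 21];
  [:: 25; 24; 28; 10; 29; 19; 3; 17];
  [:: 18; 1; 21; 15; 6; 28; 26; 5];
  [:: 11; 23; 20; 30; 5; 15; 7; 22];
  [:: 26; 25; 29; 11; 15; 20; 4; 18];
  [:: 19; 2; 22; 16; 7; 29; 27; 6];
  [:: 12; 24; 21; 30; 6; 16; 8; 23];
  [:: 27; 26; 15; 12; 16; 21; 5; 19];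
  [:: 20; 3; 23; 17; 8; 15; 28; 7];
  [:: 13; 25; 22; 30; 7; 17; 9; 24];
  [:: 28; 27; 16; 13; 17; 22; 6; 20];
  [:: 21; 4; 24; 18; 9; 16; 29; 8];
  [:: 14; 26; 23; 30; 8; 18; 10; 25];
  [:: 29; 28; 17; 14; 18; 23; 7; 21];
  [:: 22; 5; 25; 19; 10; 17; 15; 9];
  [:: 0; 27; 24; 30; 9; 19; 11; 26];
  [:: 15; 29; 18; 0; 19; 24; 8; 22];
  [:: 23; 6; 26; 20; 11; 18; 16; 10];
  [:: 1; 28; 25; 30; 10; 20; 12; 27];
  [:: 16; 15; 19; 1; 20; 25; 9; 23];
  [:: 24; 7; 27; 21; 12; 19; 17; 11];
  [:: 2; 29; 26; 30; 11; 21; 13; 28]].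
Definition raw3 : seq (seq nat) :=
 [:: [:: 0; 16; 1; 17; 2; 18; 3; 19];
  [:: 0; 18; 1; 19; 2; 16; 3; 17];
  [:: 0; 20; 1; 21; 2; 22; 3; 23];
  [:: 0; 22; 1; 23; 2; 20; 3; 21];
  [:: 0; 24; 1; 25; 2; 26; 3; 27];
  [:: 0; 26; 1; 27; 2; 24; 3; 25];
  [:: 0; 28; 1; 29; 2; 30; 3; 31];
  [:: 0; 30; 1; 31; 2; 28; 3; 29];
  [:: 4; 16; 5; 17; 6; 18; 7; 19];
  [:: 4; 18; 5; 19; 6; 16; 7; 17];
  [:: 4; 20; 5; 21; 6; 22; 7; 23];
  [:: 4; 22; 5; 23; 6; 20; 7; 21];
  [:: 4; 24; 5; 25; 6; 26; 7; 27];
  [:: 4; 26; 5; 27; 6; 24; 7; 25];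
  [:: 4; 28; 5; 29; 6; 30; 7; 31];
  [:: 4; 30; 5; 31; 6; 28; 7; 29];
  [:: 8; 16; 9; 17; 10; 18; 11; 19];
  [:: 8; 18; 9; 19; 10; 16; 11; 17];
  [:: 8; 20; 9; 21; 10; 22; 11; 23];
  [:: 8; 22; 9; 23; 10; 20; 11; 21];
  [:: 8; 24; 9; 25; 10; 26; 11; 27];
  [:: 8; 26; 9; 27; 10; 24; 11; 25];
  [:: 8; 28; 9; 29; 10; 30; 11; 31];
  [:: 8; 30; 9; 31; 10; 28; 11; 29];
  [:: 12; 16; 13; 17; 14; 18; 15; 19];
  [:: 12; 18; 13; 19; 14; 16; 15; 17];
  [:: 12; 20; 13; 21; 14; 22; 15; 23];
  [:: 12; 22; 13; 23; 14; 20; 15; 21];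
  [:: 12; 24; 13; 25; 14; 26; 15; 27];
  [:: 12; 26; 13; 27; 14; 24; 15; 25];
  [:: 12; 28; 13; 29; 14; 30; 15; 31];
  [:: 12; 30; 13; 31; 14; 28; 15; 29]].
Definition raw3' : seq (seq nat) :=
 [:: [:: 0; 18; 1; 19; 2; 16; 3; 17];
  [:: 0; 16; 1; 17; 2; 18; 3; 19];
  [:: 0; 22; 1; 23; 2; 20; 3; 21];
  [:: 0; 20; 1; 21; 2; 22; 3; 23];
  [:: 0; 26; 1; 27; 2; 24; 3; 25];
  [:: 0; 24; 1; 25; 2; 26; 3; 27];
  [:: 0; 30; 1; 31; 2; 28; 3; 29];
  [:: 0; 28; 1; 29; 2; 30; 3; 31];
  [:: 4; 18; 5; 19; 6; 16; 7; 17];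
  [:: 4; 16; 5; 17; 6; 18; 7; 19];
  [:: 4; 22; 5; 23; 6; 20; 7; 21];
  [:: 4; 20; 5; 21; 6; 22; 7; 23];
  [:: 4; 26; 5; 27; 6; 24; 7; 25];
  [:: 4; 24; 5; 25; 6; 26; 7; 27];
  [:: 4; 30; 5; 31; 6; 28; 7; 29];
  [:: 4; 28; 5; 29; 6; 30; 7; 31];
  [:: 8; 18; 9; 19; 10; 16; 11; 17];
  [:: 8; 16; 9; 17; 10; 18; 11; 19];
  [:: 8; 22; 9; 23; 10; 20; 11; 21];
  [:: 8; 20; 9; 21; 10; 22; 11; 23];
  [:: 8; 26; 9; 27; 10; 24; 11; 25];
  [:: 8; 24; 9; 25; 10; 26; 11; 27];
  [:: 8; 30; 9; 31; 10; 28; 11; 29];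
  [:: 8; 28; 9; 29; 10; 30; 11; 31];
  [:: 12; 18; 13; 19; 14; 16; 15; 17];
  [:: 12; 16; 13; 17; 14; 18; 15; 19];
  [:: 12; 22; 13; 23; 14; 20; 15; 21];
  [:: 12; 20; 13; 21; 14; 22; 15; 23];
  [:: 12; 26; 13; 27; 14; 24; 15; 25];
  [:: 12; 24; 13; 25; 14; 26; 15; 27];
  [:: 12; 30; 13; 31; 14; 28; 15; 29];
  [:: 12; 28; 13; 29; 14; 30; 15; 31]].
Definition leave_pairs : seq (nat * nat) := [:: (0, 5); (5, 10); (0, 10); (1, 6); (6, 11); (1, 11); (2, 7); (7, 12); (2, 12)].

Definition hG (j : nat) (v : nat) := if v < 15 then v else v + 16 * j.
Definition hP (i j : nat) (v : nat) :=
  if v < 16 then 15 + 16 * i + v else 15 + 16 * j + (v - 16).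

Definition build N K (T1 T2 T3 : seq (seq nat)) : seq (8.-tuple 'I_N.+1) :=
  [seq cycN N id s | s <- T1] ++
  flatten [seq [seq cycN N (hG j) s | s <- T2] ++
     flatten [seq [seq cycN N (hP i j) s | s <- T3] | i <- iota 0 j] | j <- iota 0 K].

Lemma good_id K : goodh (K * 16 + 14) 15 id.
Proof. by split => [v|u v] /=; lia. Qed.

Lemma good_G K j : j < K -> goodh (K * 16 + 14) 31 (hG j).
Proof.
move=> jK; split => [v hv|u v hu hv]; rewrite /hG.
  by case: ltnP => h; lia.
by case: (ltnP u 15) => hu'; case: (ltnP v 15) => hv'; lia.
Qed.

Lemma good_P K i j : i < j -> j < K -> goodh (K * 16 + 14) 32 (hP i j).
Proof.
move=> ij jK; split => [v hv|u v hu hv]; rewrite /hP.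
  by case: ltnP => h; lia.
by case: (ltnP u 16) => hu'; case: (ltnP v 16) => hv'; lia.
Qed.

Lemma all2_cat (S T : Type) (r : S -> T -> bool) a b c d :
  all2 r a b -> all2 r c d -> all2 r (a ++ c) (b ++ d).
Proof.
elim: a b => [|x a IH] [|y b] //= /andP [-> /IH H] /H //.
Qed.

Lemma all2_flat (S T : Type) (r : S -> T -> bool) (F : nat -> seq S) (G : nat -> seq T) s :
  (forall j, j \in s -> all2 r (F j) (G j)) ->
  all2 r (flatten (map F s)) (flatten (map G s)).
Proof.
elim: s => //= j s IH H; apply: all2_cat; first by apply: H; rewrite mem_head.
by apply: IH => x xs; apply: H; rewrite in_cons xs orbT.
Qed.

Lemma all2_map (S T S' T' : Type) (P : S -> T -> bool) (r : S' -> T' -> bool) f g a b :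
  (forall x y, P x y -> r (f x) (g y)) -> all2 P a b -> all2 r (map f a) (map g b).
Proof.
move=> H; elim: a b => [|x a IH] [|y b] //= /andP [/H -> /IH] //.
Qed.

Section Build.
Variable K : nat.
Local Notation N := (K * 16 + 14).

Lemma build_inside T1 T2 T3 T1' T2' T3' :
  all2 (insideR 15) T1 T1' -> all2 (insideR 31) T2 T2' -> all2 (insideR 32) T3 T3' ->
  all2 (@inside8 N.+1) (build N K T1 T2 T3) (build N K T1' T2' T3').
Proof.
move=> h1 h2 h3; apply: all2_cat.
  by apply: all2_map h1 => x y H; exact: (inside_cyc (good_id K) H).
apply: all2_flat => j; rewrite mem_iota /= => jK.
apply: all2_cat.
  by apply: all2_map h2 => x y H; exact: (inside_cyc (good_G jK) H).
apply: all2_flat => i; rewrite mem_iota /= => ij.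
by apply: all2_map h3 => x y H; exact: (inside_cyc (good_P ij jK) H).
Qed.

Lemma size_inner (T3 : seq (seq nat)) j (s : seq nat) :
  size (flatten [seq [seq cycN N (hP i j) x | x <- T3] | i <- s]) = size s * size T3.
Proof. by elim: s => //= i s IH; rewrite size_cat size_map IH mulSn. Qed.

Lemma size_outer (F : nat -> seq (8.-tuple 'I_N.+1)) k :
  (forall j, size (F j) = 45 + 32 * j) ->
  size (flatten [seq F j | j <- iota 0 k]) = 29 * k + 16 * (k * k).
Proof.
move=> H; elim: k => // k IH.
have E : iota 0 k.+1 = iota 0 k ++ [:: k] by rewrite -addn1 iotaD.
rewrite E map_cat flatten_cat size_cat IH /= cats0 H; nia.
Qed.

Lemma build_size T1 T2 T3 : size T1 = 12 -> size T2 = 45 -> size T3 = 32 ->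
  size (build N K T1 T2 T3) = 12 + 29 * K + 16 * (K * K).
Proof.
move=> s1 s2 s3; rewrite /build size_cat size_map s1 size_outer; first lia.
by move=> j; rewrite size_cat size_map s2 size_inner size_iota s3 mulnC.
Qed.

Definition Lset : {set {set 'I_N.+1}} :=
  [set e in [seq [set (inord p.1 : 'I_N.+1); inord p.2] | p <- leave_pairs]].

Definition chk1 T := all (fun x => all (fun y =>
   (y <= x) || ((x, y) \in leave_pairs) || covR T x y) (iota 0 15)) (iota 0 15).
Definition chk2 T := all (fun x => all (fun y =>
   (y <= x) || (y < 15) || covR T x y) (iota 0 31)) (iota 0 31).
Definition chk3 T := all (fun x => all (fun y => covR T x y) (iota 16 16)) (iota 0 16).

Lemma ord_inord (a : 'I_N.+1) v : val a = v -> a = inord v.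
Proof. by move=> <-; rewrite inord_val. Qed.

Lemma iota_in m k x : m <= x < m + k -> x \in iota m k.
Proof. by rewrite mem_iota. Qed.

Lemma chk_pick (P : nat -> nat -> bool) m1 k1 m2 k2 x y :
  all (fun x => all (fun y => P x y) (iota m2 k2)) (iota m1 k1) ->
  m1 <= x < m1 + k1 -> m2 <= y < m2 + k2 -> P x y.
Proof.
move=> /allP H hx hy; have := H x (iota_in hx); move=> /allP; apply.
exact: iota_in.
Qed.

Lemma build_cover T1 T2 T3 : chk1 T1 -> chk2 T2 -> chk3 T3 ->
  cover (build N K T1 T2 T3) Lset.
Proof.
move=> c1 c2 c3 a b ab aL.
wlog lt : a b ab aL / val a < val b.
  move=> W; case: (ltngtP (val a) (val b)) => [h|h|h]; first exact: W.
    have E : [set a; b] = [set b; a] by rewrite setUC.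
    by rewrite E in aL *; apply: W => //; rewrite eq_sym.
  by move: ab; rewrite (val_inj h) eqxx.
have aN : val a < N.+1 := ltn_ord a.
have bN : val b < N.+1 := ltn_ord b.
have memA s : s \in T1 -> cycN N id s \in build N K T1 T2 T3.
  by move=> sT; rewrite mem_cat map_f.
have memG j s : j < K -> s \in T2 -> cycN N (hG j) s \in build N K T1 T2 T3.
  move=> jK sT; rewrite mem_cat; apply/orP; right; apply/flatten_mapP.
  by exists j; [rewrite mem_iota | rewrite mem_cat map_f].
have memP i j s : i < j -> j < K -> s \in T3 -> cycN N (hP i j) s \in build N K T1 T2 T3.
  move=> ij jK sT; rewrite mem_cat; apply/orP; right; apply/flatten_mapP.
  exists j; first by rewrite mem_iota.
  rewrite mem_cat; apply/orP; right; apply/flatten_mapP.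
  by exists i; [rewrite mem_iota | rewrite map_f].
case: (ltnP (val b) 15) => hb.
  have hc : ((val a, val b) \in leave_pairs) || covR T1 (val a) (val b).
    have hA : 0 <= val a < 0 + 15 by apply/andP; split => //; lia.
    have hB : 0 <= val b < 0 + 15 by apply/andP; split => //; lia.
    have := chk_pick c1 hA hB; cbv beta.
    have -> : (val b <= val a) = false by rewrite leqNgt lt.
    by rewrite orFb.
  case/orP: hc => [inL|cv].
    exfalso; move/negP: aL; apply; rewrite inE; apply/mapP; exists (val a, val b) => //.
    by rewrite !inord_val.
  have [s sT E] := cov_lift (h := id) cv (ord_inord (erefl _)) (ord_inord (erefl _)).
  by exists (cycN N id s); [exact: memA|].
pose jb := (val b - 15) %/ 16; pose rb := (val b - 15) %% 16.
have eb : val b = 15 + 16 * jb + rb.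
  by rewrite /jb /rb; have := divn_eq (val b - 15) 16; lia.
have rb16 : rb < 16 by rewrite /rb ltn_mod.
clearbody jb rb.
have jbK : jb < K by lia.
have hGr r : r < 16 -> hG jb (15 + r) = 15 + 16 * jb + r.
  by move=> r16; rewrite /hG ltnNge leq_addr /=; lia.
case: (ltnP (val a) 15) => ha.
  have cv : covR T2 (val a) (15 + rb).
    have hA : 0 <= val a < 0 + 31 by apply/andP; split => //; lia.
    have hB : 0 <= 15 + rb < 0 + 31 by apply/andP; split => //; lia.
    have := chk_pick c2 hA hB; cbv beta.
    have -> : (15 + rb <= val a) = false by apply/negbTE; rewrite -ltnNge; lia.
    by rewrite orFb ltnNge leq_addr orFb.
  have e1 : val a = hG jb (val a).
    by rewrite /hG ha.
  have e2 : val b = hG jb (15 + rb).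
    by rewrite hGr.
  have [s sT E] := cov_lift (h := hG jb) cv (ord_inord e1) (ord_inord e2).
  by exists (cycN N (hG jb) s); [exact: memG|].
pose ja := (val a - 15) %/ 16; pose ra := (val a - 15) %% 16.
have ea : val a = 15 + 16 * ja + ra.
  by rewrite /ja /ra; have := divn_eq (val a - 15) 16; lia.
have ra16 : ra < 16 by rewrite /ra ltn_mod.
clearbody ja ra.
case: (ltngtP ja jb) => hj; last first.
- have cv : covR T2 (15 + ra) (15 + rb).
    have hA : 0 <= 15 + ra < 0 + 31 by apply/andP; split => //; lia.
    have hB : 0 <= 15 + rb < 0 + 31 by apply/andP; split => //; lia.
    have := chk_pick c2 hA hB; cbv beta.
    have -> : (15 + rb <= 15 + ra) = false by apply/negbTE; rewrite -ltnNge; lia.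
    by rewrite orFb ltnNge leq_addr orFb.
  have e1 : val a = hG jb (15 + ra).
    by rewrite hGr // -hj.
  have e2 : val b = hG jb (15 + rb).
    by rewrite hGr.
  have [s sT E] := cov_lift (h := hG jb) cv (ord_inord e1) (ord_inord e2).
  by exists (cycN N (hG jb) s); [exact: memG|].
- exfalso; lia.
- have cv : covR T3 ra (16 + rb).
    have hA : 0 <= ra < 0 + 16 by apply/andP; split.
    have hB : 16 <= 16 + rb < 16 + 16 by apply/andP; split => //; lia.
    exact: (chk_pick c3 hA hB).
  have e1 : val a = hP ja jb ra.
    by rewrite /hP ra16.
  have e2 : val b = hP ja jb (16 + rb).
    by rewrite /hP ltnNge leq_addr /= addKn.
  have [s sT E] := cov_lift (h := hP ja jb) cv (ord_inord e1) (ord_inord e2).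
  by exists (cycN N (hP ja jb) s); [exact: memP|].
Qed.

End Build.

Lemma ok_in1 : all2 (insideR 15) raw1 raw1'. Proof. by vm_compute. Qed.
Lemma ok_in2 : all2 (insideR 31) raw2 raw2'. Proof. by vm_compute. Qed.
Lemma ok_in3 : all2 (insideR 32) raw3 raw3'. Proof. by vm_compute. Qed.
Lemma ok_in1' : all2 (insideR 15) raw1' raw1. Proof. by vm_compute. Qed.
Lemma ok_in2' : all2 (insideR 31) raw2' raw2. Proof. by vm_compute. Qed.
Lemma ok_in3' : all2 (insideR 32) raw3' raw3. Proof. by vm_compute. Qed.
Lemma ok_c1 : chk1 raw1. Proof. by vm_compute. Qed.
Lemma ok_c1' : chk1 raw1'. Proof. by vm_compute. Qed.
Lemma ok_c2 : chk2 raw2. Proof. by vm_compute. Qed.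
Lemma ok_c2' : chk2 raw2'. Proof. by vm_compute. Qed.
Lemma ok_c3 : chk3 raw3. Proof. by vm_compute. Qed.
Lemma ok_c3' : chk3 raw3'. Proof. by vm_compute. Qed.

Lemma main K : exists cs : seq (8.-tuple 'I_(K * 16 + 14).+1),
  maximum_packing8 cs /\ almost_2perfect8 cs.
Proof.
exists (build (K * 16 + 14) K raw1 raw2 raw3).
apply: (framework (cs' := build (K * 16 + 14) K raw1' raw2' raw3') (L := Lset K)).
- by rewrite /= oddD oddM andbF.
- exact: all2_inside_all (build_inside K ok_in1' ok_in2' ok_in3').
- exact (build_inside K ok_in1 ok_in2 ok_in3).
- rewrite /Lset cardsE; apply: leq_trans (card_size _) _; by rewrite size_map.
- rewrite build_size // bin2.
  have -> : (K * 16 + 14).+1 * (K * 16 + 14).+1.-1 = ((K * 16 + 15) * (K * 8 + 7)).*2.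
    by rewrite -mul2n /=; nia.
  rewrite doubleK; nia.
- exact: build_cover ok_c1 ok_c2 ok_c3.
- exact: build_cover ok_c1' ok_c2' ok_c3'.
Qed.

Theorem lemma3p8 (n : nat) :
  15 <= n -> n %% 16 = 15 ->
  exists cs : seq (8.-tuple 'I_n), maximum_packing8 cs /\ almost_2perfect8 cs.
Proof.
move=> _ hn.
have -> : n = (n %/ 16 * 16 + 14).+1 by rewrite {1}(divn_eq n 16) hn addnS.
exact: main.
Qed.
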